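(* Let $k\ge5$ be odd and consider the regular $k$-gon process. There exists $\delta_k>0$ (depending only on $k$) such that for every $n$, if $m_i(n)<\rho_k+\delta_k$ for all $i=1,\dots,k$, then the change regions $\mathcal R_1(n),\dots,\mathcal R_k(n)$ are pairwise disjoint.
   Context: Let $k\ge5$ be odd and $K\subset\mathbb R^2$ the regular $k$-gon with circumradius $1$, centroid at the origin, with $(0,1)$ a vertex; $v_1,\dots,v_k$ are the position vectors of its vertices in counterclockwise order, and $\rho_k=\cos(\pi/k)$. The regular $k$-gon process: $K_0=K$, $p_{n+1}$ uniform random point in $K_n$ (conditionally on the past), $K_{n+1}=K_n\cap(p_{n+1}+K)$. Let $\alpha_i(n)=\max_{x\in K_n}\langle x,v_i\rangle$, $\alpha_i'(n)=\min_{x\in K_n}\langle x,v_i\rangle$, the $i$th height $m_i(n)=\alpha_i(n)-\alpha_i'(n)$, and the $i$th change region $\mathcal R_i(n)=\{x\in K_n:\langle x,v_i\rangle\ge\alpha_i'(n)+\rho_k\}$. *)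

(* Defs.v *)
From Stdlib Require Import Reals Lra Lia.
Open Scope R_scope.

Definition pt := (R * R)%type.
Definition dot (x y : pt) : R := fst x * fst y + snd x * snd y.
Definition psub (x y : pt) : pt := (fst x - fst y, snd x - snd y).

Definition rho (k : nat) : R := cos (PI / INR k).

(* i-th vertex (0-indexed, i = 0..k-1), counterclockwise, v_0 = (0,1):
   v_i = (cos(pi/2 + 2 pi i/k), sin(pi/2 + 2 pi i/k)). *)
Definition vtx (k i : nat) : pt :=
  (cos (PI / 2 + 2 * PI * INR i / INR k), sin (PI / 2 + 2 * PI * INR i / INR k)).

Definition inK (k : nat) (x : pt) : Prop :=
  exists w : nat -> R,
    (forall i, (i < k)%nat -> 0 <= w i) /\
    sum_f_R0 w (k - 1) = 1 /\
    fst x = sum_f_R0 (fun i => w i * fst (vtx k i)) (k - 1) /\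
    snd x = sum_f_R0 (fun i => w i * snd (vtx k i)) (k - 1).

(* K_n = K ∩ (p_1 + K) ∩ ... ∩ (p_n + K), for a sequence of points p (p 0 unused). *)
Definition inKn (k : nat) (p : nat -> pt) (n : nat) (x : pt) : Prop :=
  inK k x /\ forall j, (1 <= j <= n)%nat -> inK k (psub x (p j)).

Definition admissible (k : nat) (p : nat -> pt) : Prop :=
  forall j, inKn k p j (p (S j)).

Definition is_alpha (k : nat) (p : nat -> pt) (n i : nat) (a : R) : Prop :=
  (exists x, inKn k p n x /\ dot x (vtx k i) = a) /\
  (forall x, inKn k p n x -> dot x (vtx k i) <= a).

Definition is_alpha' (k : nat) (p : nat -> pt) (n i : nat) (a : R) : Prop :=
  (exists x, inKn k p n x /\ dot x (vtx k i) = a) /\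
  (forall x, inKn k p n x -> a <= dot x (vtx k i)).

Definition is_height (k : nat) (p : nat -> pt) (n i : nat) (h : R) : Prop :=
  exists a a', is_alpha k p n i a /\ is_alpha' k p n i a' /\ h = a - a'.

Definition in_change_region (k : nat) (p : nat -> pt) (n i : nat) (x : pt) : Prop :=
  inKn k p n x /\
  exists a', is_alpha' k p n i a' /\ a' + rho k <= dot x (vtx k i).

(* Main.v *)
Require Import Defs.
From Stdlib Require Import Reals.
From mathcomp Require all_boot all_order all_algebra.
From mathcomp Require all_classical all_reals all_analysis.
From mathcomp Require Rstruct Rstruct_topology.

Module ExtMod.

From mathcomp Require Import all_boot all_order all_algebra.
From mathcomp Require Import all_classical all_reals all_analysis.
From mathcomp Require Import Rstruct Rstruct_topology.
Import Order.TTheory GRing.Theory Num.Theory.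
Import numFieldNormedType.Exports.
Local Open Scope classical_set_scope.
Local Open Scope ring_scope.

Lemma EXT_mc (I : Type) (S : I -> Prop) (A B C : I -> R) (a b lo hi : R) (z0 : R * R) :
  (forall i, S i -> C i <= A i * z0.1 + B i * z0.2) ->
  (forall z : R * R, (forall i, S i -> C i <= A i * z.1 + B i * z.2) ->
     (lo <= z.1 <= hi) && (lo <= z.2 <= hi)) ->
  exists z : R * R, (forall i, S i -> C i <= A i * z.1 + B i * z.2) /\
    forall z' : R * R, (forall i, S i -> C i <= A i * z'.1 + B i * z'.2) ->
      a * z'.1 + b * z'.2 <= a * z.1 + b * z.2.
Proof.
move=> Hz0 Hb.
pose P : set (R * R) := fun z => forall i, S i -> C i <= A i * z.1 + B i * z.2.
have lin : forall a b : R, continuous (fun z : R * R => a * z.1 + b * z.2).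
  move=> a' b'.
  have h : continuous (fun z : R^o * R^o => (a' * z.1 + b' * z.2 : R^o)).
    move=> z; apply: cvgD.
      apply: cvgM; first exact: cvg_cst. exact: cvg_fst.
    apply: cvgM; first exact: cvg_cst. exact: cvg_snd.
  exact: h.
have clP : closed P.
  have -> : P = \bigcap_(i in S) ((fun z : R * R => A i * z.1 + B i * z.2) @^-1` [set x | C i <= x]).
    by apply/seteqP; split => z Hz i Si; apply: Hz.
  apply: closed_bigI => i Si; apply: preimage_closed; last exact: closed_ge.
  by move=> z _; apply: lin.
have cpP : compact P.
  apply: (subclosed_compact clP (compact_setX (@segment_compact R lo hi) (@segment_compact R lo hi))).
  move=> z /Hb /andP [H1 H2]; split => /=; rewrite in_itv /=; assumption.
have [c cP cmax] := compact_EVT_max (f := fun z : R * R => a * z.1 + b * z.2) (ex_intro _ z0 Hz0) cpP (continuous_subspaceT (lin a b)).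
exists c; split; first by rewrite inE in cP.
by move=> z' Hz'; apply: cmax; rewrite inE.
Qed.

Lemma EXT_std (I : Type) (S : I -> Prop) (A B C : I -> R) (a b lo hi : R) (z0 : R * R) :
  (forall i, S i -> Rle (C i) (Rplus (Rmult (A i) (fst z0)) (Rmult (B i) (snd z0)))) ->
  (forall z : R * R, (forall i, S i -> Rle (C i) (Rplus (Rmult (A i) (fst z)) (Rmult (B i) (snd z)))) ->
     Rle lo (fst z) /\ Rle (fst z) hi /\ Rle lo (snd z) /\ Rle (snd z) hi) ->
  exists z : R * R, (forall i, S i -> Rle (C i) (Rplus (Rmult (A i) (fst z)) (Rmult (B i) (snd z)))) /\
    forall z' : R * R, (forall i, S i -> Rle (C i) (Rplus (Rmult (A i) (fst z')) (Rmult (B i) (snd z')))) ->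
      Rle (Rplus (Rmult a (fst z')) (Rmult b (snd z'))) (Rplus (Rmult a (fst z)) (Rmult b (snd z))).
Proof.
move=> H0 Hb.
have [z [Hz Hm]] := @EXT_mc I S A B C a b lo hi z0 (fun i Si => introT RleP (H0 i Si))
  (fun z Hz => let: conj h1 (conj h2 (conj h3 h4)) := Hb z (fun i Si => elimT RleP (Hz i Si)) in
     introT andP (conj (introT andP (conj (introT RleP h1) (introT RleP h2)))
                        (introT andP (conj (introT RleP h3) (introT RleP h4))))).
exists z; split.
  by move=> i Si; apply/RleP; apply: Hz.
move=> z' Hz'; apply/RleP; apply: Hm => i Si; apply/RleP; exact: Hz'.
Qed.
End ExtMod.

From Stdlib Require Import Reals Lra Lia Arith Compare_dec Classical.
Open Scope R_scope.

Definition cr (u w : pt) : R := fst u * snd w - snd u * fst w.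

Section Geo.
Variables k m : nat.
Hypothesis Hkm : k = (2*m+1)%nat.
Hypothesis Hm2 : (2 <= m)%nat.

Definition th := 2*PI/INR k.
Definition ang (i : nat) := PI/2 + INR i * th.

Lemma INRk : INR k = 2 * INR m + 1.
Proof. rewrite Hkm, plus_INR, mult_INR. simpl. lra. Qed.

Lemma INRm2 : 2 <= INR m.
Proof. replace 2 with (INR 2) by (simpl; lra). apply le_INR; lia. Qed.

Lemma INRk_pos : 0 < INR k.
Proof. rewrite INRk. pose proof INRm2. lra. Qed.

Lemma kth : INR k * th = 2*PI.
Proof. unfold th. field. apply Rgt_not_eq, INRk_pos. Qed.

Lemma th_pos : 0 < th.
Proof. unfold th. apply Rdiv_lt_0_compat. pose proof PI_RGT_0; lra. apply INRk_pos. Qed.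

Lemma mth : INR m * th = PI - th/2.
Proof. pose proof kth. rewrite INRk in H. lra. Qed.

Lemma th_le : th <= 2*PI/5.
Proof.
  unfold th. apply Rmult_le_compat_l. pose proof PI_RGT_0; lra.
  apply Rinv_le_contravar. lra. rewrite INRk. pose proof INRm2. lra.
Qed.

Lemma rho_eq : rho k = cos (th/2).
Proof. unfold rho, th. f_equal. field. apply Rgt_not_eq, INRk_pos. Qed.

Lemma vtx_eq i : vtx k i = (cos (ang i), sin (ang i)).
Proof.
  unfold vtx, ang, th. f_equal; f_equal; field; apply Rgt_not_eq, INRk_pos.
Qed.

Lemma vtx_plus_k i : vtx k (i + k) = vtx k i.
Proof.
  rewrite !vtx_eq. unfold ang. rewrite plus_INR.
  replace (PI / 2 + (INR i + INR k) * th) with ((PI / 2 + INR i * th) + 2*PI)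
    by (pose proof kth; lra).
  set (x := PI / 2 + INR i * th).
  rewrite (cos_plus x), (sin_plus x), cos_2PI, sin_2PI. apply injective_projections; simpl; ring.
Qed.

Lemma vtx_plus_qk i q : vtx k (i + q*k) = vtx k i.
Proof.
  induction q as [|q IH]. { f_equal; lia. }
  replace (i + S q * k)%nat with ((i + q*k) + k)%nat by lia.
  rewrite vtx_plus_k. exact IH.
Qed.

Lemma k_neq0 : k <> 0%nat.
Proof. lia. Qed.

Lemma vtx_mod i : vtx k i = vtx k (i mod k).
Proof.
  pose proof (Nat.div_mod i k k_neq0) as H.
  rewrite H at 1.
  replace (k * (i / k) + i mod k)%nat with (i mod k + (i/k) * k)%nat by ring.
  apply vtx_plus_qk.
Qed.

Lemma dot_vtx a b : dot (vtx k a) (vtx k b) = cos ((INR a - INR b) * th).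
Proof.
  rewrite !vtx_eq. unfold dot; simpl.
  replace ((INR a - INR b) * th) with (ang a - ang b) by (unfold ang; ring).
  rewrite cos_minus. ring.
Qed.

Lemma cr_vtx a b : cr (vtx k a) (vtx k b) = sin ((INR b - INR a) * th).
Proof.
  rewrite !vtx_eq. unfold cr; simpl.
  replace ((INR b - INR a) * th) with (ang b - ang a) by (unfold ang; ring).
  rewrite sin_minus. ring.
Qed.

Lemma rel_exists a e : exists r, (r < k)%nat /\ vtx k a = vtx k (e + r).
Proof.
  pose proof (Nat.mod_upper_bound a k k_neq0) as Ha.
  pose proof (Nat.mod_upper_bound e k k_neq0) as He.
  pose proof (Nat.div_mod e k k_neq0) as Hed.
  destruct (le_lt_dec (e mod k) (a mod k)) as [Hle|Hlt].
  - exists (a mod k - e mod k)%nat. split. lia.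
    rewrite (vtx_mod a). rewrite Hed at 1.
    replace (k * (e / k) + e mod k + (a mod k - e mod k))%nat
      with (a mod k + (e/k)*k)%nat by (rewrite Nat.mul_comm; lia).
    symmetry. apply vtx_plus_qk.
  - exists (a mod k + k - e mod k)%nat. split. lia.
    rewrite (vtx_mod a). rewrite Hed at 1.
    replace (k * (e / k) + e mod k + (a mod k + k - e mod k))%nat
      with (a mod k + (S (e/k))*k)%nat by (rewrite Nat.mul_comm; simpl; lia).
    symmetry. apply vtx_plus_qk.
Qed.

Lemma cos_PI_minus x : cos (PI - x) = - cos x.
Proof. replace (PI - x) with (-x + PI) by ring. rewrite neg_cos, cos_neg. ring. Qed.

Lemma cos_mult_ge r : (r <= k)%nat -> cos (INR r * th) >= - rho k.
Proof.
  intro Hr. rewrite rho_eq. pose proof th_pos. pose proof mth. pose proof PI_RGT_0.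
  assert (Hmain : forall s, (s <= m)%nat -> cos (INR s * th) >= - cos (th/2)).
  { intros s Hs. rewrite <- cos_PI_minus. rewrite <- mth.
    assert (INR s <= INR m) by (apply le_INR; lia).
    assert (0 <= INR s) by apply pos_INR.
    destruct (Req_dec (INR s) (INR m)) as [E|E].
    - rewrite E. lra.
    - left. assert (INR s < INR m) by lra. apply cos_decreasing_1; nra. }
  destruct (le_lt_dec r m) as [Hl|Hl].
  - apply Hmain; exact Hl.
  - replace (INR r * th) with (- (INR (k - r) * th) + 2*PI).
    + rewrite cos_plus, cos_2PI, sin_2PI, cos_neg.
      replace (cos (INR (k - r) * th) * 1 - sin (- (INR (k - r) * th)) * 0)
        with (cos (INR (k - r) * th)) by ring.
      apply Hmain. lia.
    + rewrite minus_INR by lia. pose proof kth. lra.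
Qed.

Lemma dot_ge a b : dot (vtx k a) (vtx k b) >= - rho k.
Proof.
  rewrite (vtx_mod a), (vtx_mod b), dot_vtx.
  pose proof (Nat.mod_upper_bound a k k_neq0).
  pose proof (Nat.mod_upper_bound b k k_neq0).
  destruct (le_lt_dec (b mod k) (a mod k)).
  - rewrite <- minus_INR by lia. apply cos_mult_ge. lia.
  - replace ((INR (a mod k) - INR (b mod k)) * th) with (- ((INR (b mod k) - INR (a mod k)) * th)) by ring.
    rewrite cos_neg. rewrite <- minus_INR by lia. apply cos_mult_ge. lia.
Qed.

Lemma dot_le1 a b : dot (vtx k a) (vtx k b) <= 1.
Proof. rewrite dot_vtx. apply COS_bound. Qed.
Lemma dot_geM1 a b : -1 <= dot (vtx k a) (vtx k b).
Proof. rewrite dot_vtx. apply COS_bound. Qed.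

End Geo.

Section GeoB.
Variables k m : nat.
Hypothesis Hkm : k = (2*m+1)%nat.
Hypothesis Hm2 : (2 <= m)%nat.

Notation th := (th k).
Notation vtx := (vtx k).

Lemma m1th : (INR m + 1) * th = PI + th/2.
Proof. pose proof (mth k m Hkm Hm2). lra. Qed.

Lemma th_facts : 0 < th /\ th <= 2*PI/5 /\ INR m * th = PI - th/2 /\ 0 < PI.
Proof.
  split. apply (th_pos k m Hkm Hm2). split. apply (th_le k m Hkm Hm2).
  split. apply (mth k m Hkm Hm2). apply PI_RGT_0.
Qed.

Lemma rho_pos : 0 < rho k.
Proof.
  rewrite (rho_eq k m Hkm Hm2). destruct th_facts as (H1 & H2 & H3 & H4).
  apply cos_gt_0; lra.
Qed.

Lemma rho_lt1 : rho k < 1.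
Proof.
  rewrite (rho_eq k m Hkm Hm2). destruct th_facts as (H1 & H2 & H3 & H4).
  rewrite <- cos_0. apply cos_decreasing_1; lra.
Qed.

Lemma dot_vtx' a b : dot (vtx a) (vtx b) = cos ((INR a - INR b) * th).
Proof. apply (dot_vtx k m Hkm Hm2). Qed.

Lemma move_pos e r : (r <= m)%nat ->
  0 <= dot (vtx e) (vtx (e + r)) + dot (vtx (e + m)) (vtx (e + r)).
Proof.
  intro Hr. rewrite !dot_vtx', !plus_INR.
  destruct th_facts as (H1 & H2 & H3 & H4).
  assert (0 <= INR r) by apply pos_INR.
  assert (INR r <= INR m) by (apply le_INR; lia).
  rewrite form1.
  apply Rmult_le_pos. apply Rmult_le_pos. lra.
  - apply cos_ge_0; nra.
  - apply cos_ge_0; nra.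
Qed.

Lemma k2_pos t2 : (t2 <= m)%nat ->
  0 < cos (INR (t2+m+1) * th) + cos (INR t2 * th).
Proof.
  intro Ht. rewrite !plus_INR. simpl INR.
  destruct th_facts as (H1 & H2 & H3 & H4).
  pose proof m1th.
  assert (0 <= INR t2) by apply pos_INR.
  assert (INR t2 <= INR m) by (apply le_INR; lia).
  rewrite form1.
  assert (A1 : cos ((((INR t2 + INR m + 1) * th) - INR t2 * th) / 2) < 0).
  { apply cos_lt_0; nra. }
  assert (A2 : cos ((((INR t2 + INR m + 1) * th) + INR t2 * th) / 2) < 0).
  { apply cos_lt_0; nra. }
  nra.
Qed.

Lemma sin_ge r : (r <= m)%nat -> 0 <= sin (INR r * th).
Proof.
  intro Hr. destruct th_facts as (H1 & H2 & H3 & H4).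
  assert (0 <= INR r) by apply pos_INR.
  assert (INR r <= INR m) by (apply le_INR; lia).
  apply sin_ge_0; nra.
Qed.

Lemma sin_gt r : (1 <= r)%nat -> (r <= m)%nat -> 0 < sin (INR r * th).
Proof.
  intros Hr1 Hr. destruct th_facts as (H1 & H2 & H3 & H4).
  assert (1 <= INR r) by (replace 1 with (INR 1) by reflexivity; apply le_INR; lia).
  assert (INR r <= INR m) by (apply le_INR; lia).
  apply sin_gt_0; nra.
Qed.

Lemma cone_trig psi S T :
  sin (S+T) * cos psi = sin T * cos (psi - S) + sin S * cos (psi + T) /\
  sin (S+T) * sin psi = sin T * sin (psi - S) + sin S * sin (psi + T).
Proof.
  rewrite sin_plus, cos_minus, cos_plus, sin_minus, sin_plus. split; ring.
Qed.

Lemma cone_id (z : pt) a r s : (s <= r)%nat ->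
  sin (INR r * th) * dot z (vtx (a + s)) =
  sin (INR (r - s) * th) * dot z (vtx a) + sin (INR s * th) * dot z (vtx (a + r)).
Proof.
  intro Hs. rewrite !(vtx_eq k m Hkm Hm2). unfold dot; simpl.
  destruct (cone_trig (ang k (a + s)) (INR s * th) (INR (r - s) * th)) as [E1 E2].
  replace (INR s * th + INR (r - s) * th) with (INR r * th) in E1, E2
    by (rewrite minus_INR by lia; ring).
  replace (ang k (a + s) - INR s * th) with (ang k a) in E1, E2
    by (unfold ang; rewrite plus_INR; ring).
  replace (ang k (a + s) + INR (r - s) * th) with (ang k (a + r)) in E1, E2
    by (unfold ang; rewrite !plus_INR, minus_INR by lia; ring).
  replace (sin (INR r * th) * (fst z * cos (ang k (a + s)) + snd z * sin (ang k (a + s))))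
    with (fst z * (sin (INR r * th) * cos (ang k (a + s))) + snd z * (sin (INR r * th) * sin (ang k (a + s)))) by ring.
  rewrite E1, E2. ring.
Qed.

Lemma sin_gPI g : sin (INR g * PI) = 0.
Proof.
  induction g as [|g IH]. simpl. rewrite Rmult_0_l. apply sin_0.
  rewrite S_INR. replace ((INR g + 1) * PI) with (INR g * PI + PI) by ring.
  rewrite neg_sin, IH. ring.
Qed.

Lemma cos_gPI_sq g : cos (INR g * PI) * cos (INR g * PI) = 1.
Proof.
  pose proof (sin2_cos2 (INR g * PI)). rewrite sin_gPI in H. unfold Rsqr in H. lra.
Qed.

Lemma bisect (z : pt) i g :
  dot z (vtx i) + dot z (vtx (i + g)) =
  2 * cos (INR g * th / 2) * cos (INR g * PI) * dot z (vtx (i + g * (m+1))).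
Proof.
  rewrite !(vtx_eq k m Hkm Hm2). unfold dot; simpl.
  set (A := ang k i).
  assert (E1 : ang k (i + g) = A + INR g * th) by (unfold A, ang; rewrite plus_INR; ring).
  assert (E2 : ang k (i + g * (m + 1)) = (A + INR g * th / 2) + INR g * PI).
  { unfold A, ang. rewrite plus_INR, mult_INR, plus_INR. simpl INR.
    pose proof m1th. 
    replace (PI / 2 + (INR i + INR g * (INR m + 1)) * th) with (PI/2 + INR i * th + INR g * ((INR m + 1) * th)) by ring.
    rewrite H. field. }
  rewrite E1, E2.
  rewrite (cos_plus (A + INR g * th / 2)), (sin_plus (A + INR g * th / 2)), sin_gPI.
  replace (fst z * cos A + snd z * sin A + (fst z * cos (A + INR g * th) + snd z * sin (A + INR g * th)))
    with (fst z * (cos A + cos (A + INR g * th)) + snd z * (sin A + sin (A + INR g * th))) by ring.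
  rewrite form1, form3.
  replace ((A - (A + INR g * th)) / 2) with (- (INR g * th / 2)) by field.
  replace ((A + (A + INR g * th)) / 2) with (A + INR g * th / 2) by field.
  rewrite cos_neg.
  pose proof (cos_gPI_sq g) as Hs.
  set (s := cos (INR g * PI)) in *.
  replace (2 * cos (INR g * th / 2) * s *
   (fst z * (cos (A + INR g * th / 2) * s - sin (A + INR g * th / 2) * 0) +
    snd z * (sin (A + INR g * th / 2) * s + cos (A + INR g * th / 2) * 0)))
  with ((s * s) * (2 * cos (INR g * th / 2) *
   (fst z * cos (A + INR g * th / 2) + snd z * sin (A + INR g * th / 2)))) by ring.
  rewrite Hs. ring.
Qed.

Lemma dtrick (d : pt) i g : (1 <= g)%nat -> (g <= m)%nat ->
  rho k <= dot d (vtx i) -> rho k <= dot d (vtx (i + g)) ->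
  1 <= dot d (vtx (i + g * (m+1))) \/ dot d (vtx (i + g * (m+1))) <= -1.
Proof.
  intros Hg1 Hg Hi Hj.
  pose proof (bisect d i g) as E.
  set (D := dot d (vtx (i + g * (m + 1)))) in *.
  set (c := cos (INR g * th / 2)) in *.
  set (s := cos (INR g * PI)) in *.
  pose proof (cos_gPI_sq g) as Hs. fold s in Hs.
  pose proof rho_pos as Hr.
  destruct th_facts as (H1 & H2 & H3 & H4).
  assert (1 <= INR g) by (replace 1 with (INR 1) by reflexivity; apply le_INR; lia).
  assert (INR g <= INR m) by (apply le_INR; lia).
  assert (Hc0 : 0 <= c) by (unfold c; apply cos_ge_0; nra).
  assert (Hc1 : c <= rho k).
  { rewrite (rho_eq k m Hkm Hm2). unfold c.
    destruct (Req_dec (INR g) 1) as [Eg|Eg].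
    - rewrite Eg. right. replace (1 * th / 2) with (th / 2) by field. reflexivity.
    - left. apply cos_decreasing_1; nra. }
  assert (Ht : 1 <= s * D).
  { destruct (Rle_lt_dec 1 (s * D)) as [h|h]. exact h.
    exfalso. assert (c * (s * D) < rho k).
    { destruct (Rle_lt_dec (s*D) 0). nra. nra. }
    nra. }
  assert (1 <= D * D) by nra.
  destruct (Rle_lt_dec 0 D). left. nra. right. nra.
Qed.

Lemma zero_comb (z : pt) : 2 * rho k * dot z (vtx 0) + dot z (vtx m) + dot z (vtx (m+1)) = 0.
Proof.
  pose proof (bisect z m 1) as E.
  replace (m + 1 * (m + 1))%nat with (0 + k)%nat in E by lia.
  rewrite (vtx_plus_k k m Hkm Hm2) in E.
  replace (INR 1) with 1 in E by reflexivity.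
  replace (1 * PI) with PI in E by ring. rewrite cos_PI in E.
  replace (1 * th / 2) with (th / 2) in E by field.
  rewrite <- (rho_eq k m Hkm Hm2) in E. lra.
Qed.

End GeoB.

Lemma sum_zero N : sum_f_R0 (fun _ => 0) N = 0.
Proof. induction N. simpl; ring. simpl. rewrite IHN. ring. Qed.

Lemma sum_ind (c N : nat) (f : nat -> R) : (c <= N)%nat ->
  sum_f_R0 (fun i => if Nat.eqb i c then f i else 0) N = f c.
Proof.
  induction N as [|N IH]; intro H.
  - assert (c = 0%nat) by lia. subst. simpl. reflexivity.
  - destruct (Nat.eq_dec c (S N)) as [E|E].
    + subst c. rewrite tech5. rewrite Nat.eqb_refl.
      replace (sum_f_R0 (fun i : nat => if Nat.eqb i (S N) then f i else 0) N) with 0. ring.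
      symmetry. transitivity (sum_f_R0 (fun _ => 0) N).
      apply sum_eq. intros i Hi. destruct (Nat.eqb_spec i (S N)). lia. reflexivity.
      apply sum_zero.
    + rewrite tech5. rewrite IH by lia.
      destruct (Nat.eqb_spec (S N) c). lia. ring.
Qed.

Section GeoC.
Variables k m : nat.
Hypothesis Hkm : k = (2*m+1)%nat.
Hypothesis Hm2 : (2 <= m)%nat.

Notation th := (th k).
Notation vtx := (vtx k).

Lemma sum_mul_r (f : nat -> R) N c : sum_f_R0 f N * c = sum_f_R0 (fun i => f i * c) N.
Proof. rewrite Rmult_comm, scal_sum. reflexivity. Qed.

Lemma dot_sum (w : nat -> R) N (u : pt) :
  sum_f_R0 (fun i => w i * fst (vtx i)) N * fst u + sum_f_R0 (fun i => w i * snd (vtx i)) N * snd u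
  = sum_f_R0 (fun i => w i * dot (vtx i) u) N.
Proof.
  rewrite !sum_mul_r, <- plus_sum. apply sum_eq. intros i _. unfold dot. ring.
Qed.


Lemma hrep1 z : inK k z -> forall a, dot z (vtx a) >= - rho k.
Proof.
  intros [w (Hw & Hs & Hx & Hy)] a.
  unfold dot at 1. rewrite Hx, Hy, dot_sum.
  apply Rle_ge.
  replace (- rho k) with (sum_f_R0 (fun i => w i * (- rho k)) (k-1)).
  2:{ rewrite <- sum_mul_r, Hs. ring. }
  apply sum_Rle. intros i Hi. apply Rmult_le_compat_l. apply Hw. lia.
  apply Rge_le, (dot_ge k m Hkm Hm2).
Qed.

Lemma inK_bound z : inK k z -> -1 <= fst z <= 1 /\ -1 <= snd z <= 1.
Proof.
  intros [w (Hw & Hs & Hx & Hy)].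
  assert (HH : forall g : nat -> R, (forall i, -1 <= g i <= 1) ->
     -1 <= sum_f_R0 (fun i => w i * g i) (k-1) <= 1).
  { intros g Hg. split.
    - replace (-1) with (sum_f_R0 (fun i => w i * (-1)) (k-1)).
      2:{ rewrite <- sum_mul_r, Hs. ring. }
      apply sum_Rle. intros i Hi. apply Rmult_le_compat_l. apply Hw; lia. apply Hg.
    - apply Rle_trans with (sum_f_R0 (fun i => w i * 1) (k-1)).
      apply sum_Rle. intros i Hi. apply Rmult_le_compat_l. apply Hw; lia. apply Hg.
      rewrite <- sum_mul_r, Hs. lra. }
  rewrite Hx, Hy. split; apply HH; intro i; unfold vtx; simpl; apply COS_bound || apply SIN_bound.
Qed.

Definition ind (c : nat) (x : R) (i : nat) : R := if Nat.eqb i c then x else 0.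

Lemma sum_ind_mul (c N : nat) x (g : nat -> R) : (c <= N)%nat ->
  sum_f_R0 (fun i => ind c x i * g i) N = x * g c.
Proof.
  intro H. rewrite <- (sum_ind c N (fun i => x * g i) H). apply sum_eq. intros i _.
  unfold ind. destruct (Nat.eqb i c); ring.
Qed.

Lemma inK_comb5 (i1 i2 i3 i4 i5 : nat) (c1 c2 c3 c4 c5 : R) (z : pt) :
  (i1 < k)%nat -> (i2 < k)%nat -> (i3 < k)%nat -> (i4 < k)%nat -> (i5 < k)%nat ->
  0 <= c1 -> 0 <= c2 -> 0 <= c3 -> 0 <= c4 -> 0 <= c5 ->
  c1 + c2 + c3 + c4 + c5 = 1 ->
  fst z = c1 * fst (vtx i1) + c2 * fst (vtx i2) + c3 * fst (vtx i3) + c4 * fst (vtx i4) + c5 * fst (vtx i5) ->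
  snd z = c1 * snd (vtx i1) + c2 * snd (vtx i2) + c3 * snd (vtx i3) + c4 * snd (vtx i4) + c5 * snd (vtx i5) ->
  inK k z.
Proof.
  intros H1 H2 H3 H4 H5 P1 P2 P3 P4 P5 Hs Hx Hy.
  exists (fun i => ind i1 c1 i + ind i2 c2 i + ind i3 c3 i + ind i4 c4 i + ind i5 c5 i).
  assert (G : forall g : nat -> R,
    sum_f_R0 (fun i => (ind i1 c1 i + ind i2 c2 i + ind i3 c3 i + ind i4 c4 i + ind i5 c5 i) * g i) (k-1)
    = c1 * g i1 + c2 * g i2 + c3 * g i3 + c4 * g i4 + c5 * g i5).
  { intro g.
    transitivity (sum_f_R0 (fun i => ind i1 c1 i * g i) (k-1) + sum_f_R0 (fun i => ind i2 c2 i * g i) (k-1)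
      + sum_f_R0 (fun i => ind i3 c3 i * g i) (k-1) + sum_f_R0 (fun i => ind i4 c4 i * g i) (k-1)
      + sum_f_R0 (fun i => ind i5 c5 i * g i) (k-1)).
    - rewrite <- !plus_sum. apply sum_eq. intros; ring.
    - rewrite !sum_ind_mul by lia. reflexivity. }
  split; [|split; [|split]].
  - intros i _. unfold ind.
    destruct (Nat.eqb i i1), (Nat.eqb i i2), (Nat.eqb i i3), (Nat.eqb i i4), (Nat.eqb i i5); lra.
  - pose proof (G (fun _ => 1)) as E. simpl in E.
    replace (sum_f_R0 (fun i => ind i1 c1 i + ind i2 c2 i + ind i3 c3 i + ind i4 c4 i + ind i5 c5 i) (k - 1))
      with (sum_f_R0 (fun i => (ind i1 c1 i + ind i2 c2 i + ind i3 c3 i + ind i4 c4 i + ind i5 c5 i) * 1) (k - 1)).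
    rewrite E. lra. apply sum_eq; intros; ring.
  - rewrite Hx, (G (fun i => fst (vtx i))). reflexivity.
  - rewrite Hy, (G (fun i => snd (vtx i))). reflexivity.
Qed.

Lemma vtx0 : vtx 0 = (0, 1).
Proof.
  rewrite (vtx_eq k m Hkm Hm2). unfold ang. simpl INR. rewrite Rmult_0_l, Rplus_0_r, cos_PI2, sin_PI2.
  reflexivity.
Qed.

Lemma dot_comm u w : dot u w = dot w u.
Proof. unfold dot. ring. Qed.

Lemma dot_e1 v : dot (1,0) v = fst v.
Proof. destruct v; unfold dot; simpl; ring. Qed.
Lemma dot_e2 v : dot (0,1) v = snd v.
Proof. destruct v; unfold dot; simpl; ring. Qed.

Lemma cr_as_dot u z : cr u z = dot u (snd z, - fst z).
Proof. unfold cr, dot; simpl. ring. Qed.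

Lemma walk (f : nat -> R) a0 t : 0 <= f a0 -> f (a0 + t)%nat < 0 ->
  exists s, 0 <= f (a0 + s)%nat /\ f (a0 + s + 1)%nat <= 0.
Proof.
  intros H0. induction t as [|t IH]; intro Ht.
  - rewrite Nat.add_0_r in Ht. lra.
  - destruct (Rle_lt_dec 0 (f (a0 + t)%nat)) as [h|h].
    + exists t. split. exact h. replace (a0 + t + 1)%nat with (a0 + S t)%nat by lia. lra.
    + apply IH. exact h.
Qed.

Lemma sector z : (fst z, snd z) <> (0, 0) ->
  exists a, (a < k)%nat /\ 0 <= cr (vtx a) z /\ cr (vtx (a+1)) z <= 0.
Proof.
  intro Hz.
  set (f := fun a => cr (vtx a) z).
  assert (Hc : 2 * rho k * f 0%nat + f m + f (m+1)%nat = 0).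
  { unfold f. rewrite !cr_as_dot. rewrite !(dot_comm (vtx _)). apply (zero_comb k m Hkm Hm2). }
  pose proof (rho_pos k m Hkm Hm2) as Hr.
  assert (Hneg : exists b, f b < 0).
  { destruct (Rlt_le_dec (f 0%nat) 0) as [h|h0]. exists 0%nat; exact h.
    destruct (Rlt_le_dec (f m) 0) as [h|hm]. exists m; exact h.
    destruct (Rlt_le_dec (f (m+1)%nat) 0) as [h|hm1]. exists (m+1)%nat; exact h.
    exfalso. assert (E0 : f 0%nat = 0) by nra. assert (Em : f m = 0) by nra.
    unfold f, cr in E0, Em. rewrite vtx0 in E0. rewrite (vtx_eq k m Hkm Hm2) in Em.
    simpl in E0, Em. unfold ang in Em.
    rewrite cos_plus, cos_PI2, sin_PI2 in Em.
    pose proof (sin_gt k m Hkm Hm2 m ltac:(lia) ltac:(lia)).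
    assert (fst z = 0) by lra. rewrite H0 in Em.
    apply Hz. f_equal. exact H0. nra. }
  assert (Hpos : exists a, 0 <= f a).
  { destruct (Rle_lt_dec 0 (f 0%nat)) as [h|h]. exists 0%nat; exact h.
    destruct (Rle_lt_dec 0 (f m)) as [h'|h']. exists m; exact h'.
    exists (m+1)%nat. nra. }
  destruct Hneg as [b Hb]. destruct Hpos as [a0 Ha0].
  destruct (rel_exists k m Hkm Hm2 b a0) as [t [_ Ht]].
  assert (Hf : f (a0 + t)%nat < 0) by (unfold f; rewrite <- Ht; exact Hb).
  destruct (walk f a0 t Ha0 Hf) as [s [H1 H2]].
  exists ((a0 + s) mod k)%nat. split. apply Nat.mod_upper_bound; lia.
  unfold f in H1, H2.
  rewrite <- (vtx_mod k m Hkm Hm2). split. exact H1.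
  replace ((a0 + s) mod k + 1)%nat with (((a0 + s) mod k) + 1)%nat by reflexivity.
  rewrite (vtx_mod k m Hkm Hm2 ((a0 + s) mod k + 1)).
  rewrite Nat.add_mod_idemp_l by lia. rewrite <- (vtx_mod k m Hkm Hm2). exact H2.
Qed.

Lemma hrep_all z : (forall a, (a < k)%nat -> dot z (vtx a) >= - rho k) -> forall a, dot z (vtx a) >= - rho k.
Proof.
  intros H a. rewrite (vtx_mod k m Hkm Hm2). apply H. apply Nat.mod_upper_bound. lia.
Qed.

Lemma hrep2 z : (forall a, (a < k)%nat -> dot z (vtx a) >= - rho k) -> inK k z.
Proof.
  intro H0. pose proof (hrep_all z H0) as H.
  pose proof (rho_pos k m Hkm Hm2) as Hr.
  assert (Z0 : forall u : pt, 2 * rho k * dot u (vtx 0) + dot u (vtx m) + dot u (vtx (m+1)) = 0)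
    by (intro; apply (zero_comb k m Hkm Hm2)).
  assert (Zx := Z0 (1,0)). assert (Zy := Z0 (0,1)). rewrite !dot_e1 in Zx. rewrite !dot_e2 in Zy.
  set (c1 := 2 * rho k / (2 * rho k + 2)). set (c2 := 1 / (2 * rho k + 2)).
  assert (Hc1 : 0 <= c1) by (unfold c1; apply Rle_mult_inv_pos; lra).
  assert (Hc2 : 0 <= c2) by (unfold c2; apply Rle_mult_inv_pos; lra).
  assert (Hc12 : c1 + c2 + c2 = 1) by (unfold c1, c2; field; lra).
  assert (Zx' : c1 * fst (vtx 0) + c2 * fst (vtx m) + c2 * fst (vtx (m+1)) = 0).
  { unfold c1, c2. field_simplify; [|lra]. rewrite Zx. unfold Rdiv. ring. }
  assert (Zy' : c1 * snd (vtx 0) + c2 * snd (vtx m) + c2 * snd (vtx (m+1)) = 0).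
  { unfold c1, c2. field_simplify; [|lra]. rewrite Zy. unfold Rdiv. ring. }
  assert (Hm0 : (m < k)%nat) by lia. assert (Hm1 : (m + 1 < k)%nat) by lia.
  assert (Hk0 : (0 < k)%nat) by lia.
  assert (GEN : (fst z, snd z) <> (0,0) -> inK k z).
  { intro Hz. destruct (sector z Hz) as [a (Ha & Hca & Hcb)].
    set (e1 := vtx a) in *. set (e2 := vtx (a+1)) in *.
    assert (Hsp : 0 < sin th).
    { pose proof (sin_gt k m Hkm Hm2 1 ltac:(lia) ltac:(lia)) as P.
      replace (INR 1 * th) with th in P by (simpl; ring). exact P. }
    assert (Hs : cr e1 e2 = sin th).
    { unfold e1, e2. rewrite (cr_vtx k m Hkm Hm2). f_equal. rewrite plus_INR. simpl. ring. }
    set (al := - cr e2 z / sin th). set (be := cr e1 z / sin th).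
    assert (Hal : 0 <= al) by (unfold al; apply Rle_mult_inv_pos; lra).
    assert (Hbe : 0 <= be) by (unfold be; apply Rle_mult_inv_pos; lra).
    assert (Ex : fst z = al * fst e1 + be * fst e2).
    { unfold al, be. rewrite <- Hs. unfold cr in *. field. rewrite Hs. lra. }
    assert (Ey : snd z = al * snd e1 + be * snd e2).
    { unfold al, be. rewrite <- Hs. unfold cr in *. field. rewrite Hs. lra. }
    assert (Hsum : al + be <= 1).
    { pose proof (H (a + m + 1)%nat) as Hv.
      assert (Ed : dot z (vtx (a + m + 1)) = al * dot e1 (vtx (a+m+1)) + be * dot e2 (vtx (a+m+1))).
      { unfold dot. rewrite Ex, Ey. ring. }
      assert (D1 : dot e1 (vtx (a+m+1)) = - rho k).
      { unfold e1. rewrite (dot_vtx k m Hkm Hm2), (rho_eq k m Hkm Hm2), !plus_INR.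
        replace ((INR a - (INR a + INR m + INR 1)) * th) with (- ((INR m + 1) * th)) by (simpl; ring).
        rewrite cos_neg, (m1th k m Hkm Hm2). rewrite Rplus_comm, neg_cos. reflexivity. }
      assert (D2 : dot e2 (vtx (a+m+1)) = - rho k).
      { unfold e2. rewrite (dot_vtx k m Hkm Hm2), (rho_eq k m Hkm Hm2), !plus_INR.
        replace ((INR a + INR 1 - (INR a + INR m + INR 1)) * th) with (- (INR m * th)) by (simpl; ring).
        rewrite cos_neg, (mth k m Hkm Hm2). apply cos_PI_minus. }
      rewrite Ed, D1, D2 in Hv. nra. }
    set (ga := 1 - al - be).
    assert (Hga : 0 <= ga) by (unfold ga; lra).
    apply (inK_comb5 a ((a+1) mod k) 0 m (m+1) al be (ga*c1) (ga*c2) (ga*c2)); try lia.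
    - apply Nat.mod_upper_bound; lia.
    - exact Hal.
    - exact Hbe.
    - nra.
    - nra.
    - nra.
    - replace (al + be + ga * c1 + ga * c2 + ga * c2) with (al + be + ga * (c1 + c2 + c2)) by ring.
      rewrite Hc12. unfold ga. ring.
    - rewrite <- (vtx_mod k m Hkm Hm2). fold e2. rewrite Ex.
      transitivity (al * fst (vtx a) + be * fst e2 + ga * (c1 * fst (vtx 0) + c2 * fst (vtx m) + c2 * fst (vtx (m + 1)))).
      rewrite Zx'. unfold e1. ring. ring.
    - rewrite <- (vtx_mod k m Hkm Hm2). fold e2. rewrite Ey.
      transitivity (al * snd (vtx a) + be * snd e2 + ga * (c1 * snd (vtx 0) + c2 * snd (vtx m) + c2 * snd (vtx (m + 1)))).
      rewrite Zy'. unfold e1. ring. ring. }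
  destruct (Req_dec (fst z) 0) as [Ez1|Ez1]; [destruct (Req_dec (snd z) 0) as [Ez2|Ez2]|].
  - apply (inK_comb5 0 m (m+1) 0 0 c1 c2 c2 0 0); try lia; try lra.
  - apply GEN. intro E; inversion E; lra.
  - apply GEN. intro E; inversion E; lra.
Qed.

End GeoC.

Lemma dot_psub x q v : dot (psub x q) v = dot x v - dot q v.
Proof. unfold dot, psub; simpl. ring. Qed.

Lemma fin1 (Q : nat -> R -> Prop) N :
  (forall i e e', Q i e -> 0 < e' <= e -> Q i e') ->
  (forall i, (i < N)%nat -> exists e, 0 < e /\ Q i e) ->
  exists e, 0 < e /\ forall i, (i < N)%nat -> Q i e.
Proof.
  intros Hmono. induction N as [|N IH]; intro H.
  - exists 1. split. lra. intros; lia.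
  - destruct IH as [e1 [He1 H1]]. intros i Hi; apply H; lia.
    destruct (H N ltac:(lia)) as [e2 [He2 H2]].
    exists (Rmin e1 e2). split. apply Rmin_glb_lt; lra.
    intros i Hi. destruct (Nat.eq_dec i N) as [->|Hne].
    + apply (Hmono N e2). exact H2. split. apply Rmin_glb_lt; lra. apply Rmin_r.
    + apply (Hmono i e1). apply H1; lia. split. apply Rmin_glb_lt; lra. apply Rmin_l.
Qed.

Lemma maxn_ex (Q : nat -> Prop) N : (exists t, (t <= N)%nat /\ Q t) ->
  exists t, (t <= N)%nat /\ Q t /\ forall t', (t' <= N)%nat -> Q t' -> (t' <= t)%nat.
Proof.
  induction N as [|N IH]; intros [t [Ht Qt]].
  - exists t. split. exact Ht. split. exact Qt. intros; lia.
  - destruct (classic (Q (S N))) as [HS|HS].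
    + exists (S N). split. lia. split. exact HS. intros; lia.
    + destruct IH as [t0 [H0 [Q0 M0]]].
      * exists t. split; [|exact Qt]. destruct (Nat.eq_dec t (S N)) as [->|]. contradiction. lia.
      * exists t0. split. lia. split. exact Q0. intros t' Ht' Qt'.
        destruct (Nat.eq_dec t' (S N)) as [->|]. contradiction. apply M0. lia. exact Qt'.
Qed.

Section GeoD.
Variables k m : nat.
Hypothesis Hkm : k = (2*m+1)%nat.
Hypothesis Hm2 : (2 <= m)%nat.
Variable p : nat -> pt.
Variable n : nat.
Hypothesis Hadm : admissible k p.

Notation th := (th k).
Notation vtx := (vtx k).
Notation L := (inKn k p n).

Definition PP (j : nat) : pt := if Nat.eqb j 0 then (0,0) else p j.

Lemma psub0 x : psub x (0,0) = x.
Proof. destruct x. unfold psub; simpl. f_equal; ring. Qed.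

Lemma L_iff x : L x <-> forall j, (j <= n)%nat -> forall a, (a < k)%nat -> dot (psub x (PP j)) (vtx a) >= - rho k.
Proof.
  split.
  - intros [H0 H1] j Hj a Ha. unfold PP. destruct (Nat.eqb_spec j 0).
    + rewrite psub0. apply (hrep1 k m Hkm Hm2). exact H0.
    + apply (hrep1 k m Hkm Hm2). apply H1. lia.
  - intro H. split.
    + apply (hrep2 k m Hkm Hm2). intros a Ha. pose proof (H 0%nat ltac:(lia) a Ha) as P.
      unfold PP in P. simpl in P. rewrite psub0 in P. exact P.
    + intros j Hj. apply (hrep2 k m Hkm Hm2). intros a Ha. pose proof (H j ltac:(lia) a Ha) as P.
      unfold PP in P. destruct (Nat.eqb_spec j 0). lia. exact P.
Qed.

Lemma L_all z j a : L z -> (j <= n)%nat -> dot (psub z (PP j)) (vtx a) >= - rho k.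
Proof.
  intros Hz Hj. rewrite (vtx_mod k m Hkm Hm2). apply (proj1 (L_iff z) Hz j Hj).
  apply Nat.mod_upper_bound. lia.
Qed.

Lemma L_box z : L z -> -1 <= fst z <= 1 /\ -1 <= snd z <= 1.
Proof. intros [H0 _]. apply (inK_bound k m Hkm Hm2). exact H0. Qed.

Lemma ext_max (u : pt) : exists M, L M /\ forall z, L z -> dot z u <= dot M u.
Proof.
  pose (Sset := fun ja : nat * nat => (fst ja <= n)%nat /\ (snd ja < k)%nat).
  pose (A := fun ja : nat * nat => fst (vtx (snd ja))).
  pose (B := fun ja : nat * nat => snd (vtx (snd ja))).
  pose (C := fun ja : nat * nat => - rho k + dot (PP (fst ja)) (vtx (snd ja))).
  assert (Equiv : forall z, L z <-> forall ja, Sset ja -> C ja <= A ja * fst z + B ja * snd z).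
  { intro z. rewrite L_iff. split.
    - intros H [j a] [Hj Ha]. simpl in *. pose proof (H j Hj a Ha) as P.
      unfold C, A, B; cbn [fst snd]. rewrite dot_psub in P. unfold dot in P |- *. unfold Defs.vtx in *; cbn [fst snd] in *. nra.
    - intros H j Hj a Ha. pose proof (H (j,a) (conj Hj Ha)) as P.
      unfold C, A, B in P; cbn [fst snd] in P. rewrite dot_psub. unfold dot in P |- *.
      unfold Defs.vtx in *; cbn [fst snd] in *. nra. }
  destruct (ExtMod.EXT_std (nat*nat) Sset A B C (fst u) (snd u) (-1) 1 (p (S n))) as [M [HM1 HM2]].
  - apply Equiv. apply Hadm.
  - intros z Hz. apply Equiv in Hz. apply L_box in Hz. lra.
  - exists M. split. apply Equiv; exact HM1.
    intros z Hz. pose proof (HM2 z (proj1 (Equiv z) Hz)). unfold dot. lra.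
Qed.

Lemma ext_min (u : pt) : exists M, L M /\ forall z, L z -> dot M u <= dot z u.
Proof.
  destruct (ext_max (- fst u, - snd u)) as [M [HM H]].
  exists M. split. exact HM. intros z Hz. specialize (H z Hz). unfold dot in *; simpl in *. lra.
Qed.

Definition active (M : pt) (j a : nat) := dot (psub M (PP j)) (vtx a) = - rho k.
Definition MinAtV (M v : pt) := L M /\ forall z, L z -> dot M v <= dot z v.

Lemma act_min M j a : L M -> (j <= n)%nat -> active M j a -> MinAtV M (vtx a).
Proof.
  intros HM Hj Ha. split. exact HM. intros z Hz.
  pose proof (L_all z j a Hz Hj). unfold active in Ha. rewrite dot_psub in *. lra.
Qed.

Lemma move M e : L M ->
  (forall j a, (j <= n)%nat -> (a < k)%nat -> active M j a -> exists r, (r <= m)%nat /\ vtx a = vtx (e + r)) ->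
  exists eps, 0 < eps /\
    L (fst M + eps * (fst (vtx e) + fst (vtx (e + m))), snd M + eps * (snd (vtx e) + snd (vtx (e + m)))).
Proof.
  intros HM Hact.
  set (D := fun a => dot (vtx e) (vtx a) + dot (vtx (e + m)) (vtx a)).
  set (X := fun j a => dot (psub M (PP j)) (vtx a)).
  set (Q := fun j eps => forall a, (a < k)%nat -> X j a >= - rho k /\ X j a + eps * D a >= - rho k).
  assert (Hmono : forall j e1 e2, Q j e1 -> 0 < e2 <= e1 -> Q j e2).
  { intros j e1 e2 H1 H2 a Ha. destruct (H1 a Ha) as [A1 A2]. split. exact A1.
    destruct (Rle_lt_dec 0 (D a)); nra. }
  destruct (fin1 Q (S n) Hmono) as [eps [Heps HQ]].
  - intros j Hj.
    set (Q2 := fun a eps => (a < k)%nat -> X j a >= - rho k /\ X j a + eps * D a >= - rho k).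
    assert (Hmono2 : forall a e1 e2, Q2 a e1 -> 0 < e2 <= e1 -> Q2 a e2).
    { intros a e1 e2 H1 H2 Ha. destruct (H1 Ha) as [A1 A2]. split. exact A1.
      destruct (Rle_lt_dec 0 (D a)); nra. }
    destruct (fin1 Q2 k Hmono2) as [eps [Heps HQ]].
    + intros a Ha.
      assert (HX : X j a >= - rho k) by (apply (L_all M j a HM); lia).
      assert (HD : -2 <= D a <= 2).
      { unfold D. pose proof (dot_le1 k m Hkm Hm2 e a). pose proof (dot_geM1 k m Hkm Hm2 e a).
        pose proof (dot_le1 k m Hkm Hm2 (e+m) a). pose proof (dot_geM1 k m Hkm Hm2 (e+m) a). lra. }
      destruct (Req_dec (X j a) (- rho k)) as [Eq|Neq].
      * destruct (Hact j a ltac:(lia) Ha Eq) as [r [Hr Er]].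
        assert (0 <= D a).
        { unfold D. rewrite Er. apply (move_pos k m Hkm Hm2 e r Hr). }
        exists 1. split. lra. intros _. split. exact HX. nra.
      * exists ((X j a + rho k) / 2). split. lra.
        intros _. split. exact HX. nra.
    + exists eps. split. exact Heps. intros a Ha. apply (HQ a Ha). exact Ha.
  - exists eps. split. exact Heps.
    apply L_iff. intros j Hj a Ha. destruct (HQ j ltac:(lia) a Ha) as [_ H2].
    unfold X, D in H2. unfold dot, psub in *; cbn [fst snd] in *. nra.
Qed.

End GeoD.

Section GeoF.
Variables k m : nat.
Hypothesis Hkm : k = (2*m+1)%nat.
Hypothesis Hm2 : (2 <= m)%nat.
Variable p : nat -> pt.
Variable n : nat.
Hypothesis Hadm : admissible k p.

Notation th := (th k).
Notation vtx := (vtx k).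
Notation L := (inKn k p n).
Notation active := (active k p).
Notation MinAtV := (MinAtV k p n).

Lemma vtx_k i : vtx (i + k) = vtx i.
Proof. apply (vtx_plus_k k m Hkm Hm2). Qed.

Lemma k2 M c : L M -> (forall z, L z -> dot z (vtx c) <= dot M (vtx c)) ->
  exists j1 a t j2 b t',
    (j1 <= n)%nat /\ active M j1 a /\ vtx a = vtx (c + t) /\ (t <= m)%nat /\
    (j2 <= n)%nat /\ active M j2 b /\ vtx b = vtx (c + t') /\ (m + 1 <= t')%nat /\ (t' <= 2*m)%nat /\
    (t' <= t + m)%nat.
Proof.
  intros HM Hmax.
  apply NNPP. intro NP.
  set (Act := fun t => exists j a, (j <= n)%nat /\ (a < k)%nat /\ active M j a /\ vtx a = vtx (c + t)).
  assert (NP2 : forall t t', (t <= m)%nat -> (m + 1 <= t')%nat -> (t' <= 2*m)%nat -> (t' <= t + m)%nat ->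
     Act t -> Act t' -> False).
  { intros t t' H1 H2 H3 H4 [j1 [a [Hj1 [Ha [A1 V1]]]]] [j2 [b [Hj2 [Hb [A2 V2]]]]].
    apply NP. exists j1, a, t, j2, b, t'. repeat split; assumption. }
  assert (T2 : exists t2, (t2 <= m)%nat /\ (forall t, (t <= m)%nat -> Act t -> (t <= t2)%nat) /\
      (forall t', (m + 1 <= t')%nat -> (t' <= 2*m)%nat -> Act t' -> (t2 + m + 1 <= t')%nat)).
  { destruct (classic (exists t, (t <= m)%nat /\ Act t)) as [Ex|NEx].
    - destruct (maxn_ex Act m Ex) as [t2 [Ht2 [A2 M2]]].
      exists t2. split. exact Ht2. split. intros t Ht At. apply M2; assumption.
      intros t' H1 H2 At'. destruct (le_lt_dec (t2 + m + 1) t') as [h|h]. exact h.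
      exfalso. apply (NP2 t2 t'); try assumption; lia.
    - exists 0%nat. split. lia. split.
      + intros t Ht At. exfalso. apply NEx. exists t. split; assumption.
      + intros; lia. }
  destruct T2 as [t2 [Ht2 [TA TB]]].
  set (e := (c + t2 + m + 1)%nat).
  destruct (move k m Hkm Hm2 p n M e HM) as [eps [Heps HM']].
  - intros j a Hj Ha Hact.
    destruct (rel_exists k m Hkm Hm2 a c) as [t [Htk Vt]].
    assert (At : Act t) by (exists j, a; repeat split; assumption).
    destruct (le_lt_dec t m) as [Hle|Hlt].
    + assert (t <= t2)%nat by (apply TA; assumption).
      exists (t + m - t2)%nat. split. lia.
      rewrite Vt. unfold e. replace (c + t2 + m + 1 + (t + m - t2))%nat with ((c + t) + k)%nat by lia.
      symmetry. apply vtx_k.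
    + assert (t2 + m + 1 <= t)%nat by (apply TB; try lia; exact At).
      exists (t - t2 - m - 1)%nat. split. lia.
      rewrite Vt. unfold e. f_equal. lia.
  - specialize (Hmax _ HM').
    assert (Dpos : 0 < dot (vtx e) (vtx c) + dot (vtx (e + m)) (vtx c)).
    { replace (e + m)%nat with ((c + t2) + k)%nat by (unfold e; lia). rewrite vtx_k.
      unfold e. replace (c + t2 + m + 1)%nat with (c + (t2 + m + 1))%nat by lia.
      rewrite !(dot_vtx k m Hkm Hm2), !plus_INR.
      replace ((INR c + (INR t2 + INR m + INR 1) - INR c) * th) with (INR (t2 + m + 1) * th)
        by (rewrite !plus_INR; ring).
      replace ((INR c + INR t2 - INR c) * th) with (INR t2 * th) by ring.
      apply (k2_pos k m Hkm Hm2 t2 Ht2). }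
    unfold dot in Hmax, Dpos. cbn [fst snd] in Hmax. nra.
Qed.

Lemma cone_min M a r s : MinAtV M (vtx a) -> MinAtV M (vtx (a + r)) -> (r <= m)%nat -> (s <= r)%nat ->
  MinAtV M (vtx (a + s)).
Proof.
  intros [HM H1] [_ H2] Hr Hs. split. exact HM. intros z Hz.
  destruct (Nat.eq_dec r 0) as [->|Hr0].
  - replace (a + s)%nat with (a + 0)%nat by lia. apply H2. exact Hz.
  - pose proof (cone_id k m Hkm Hm2 z a r s Hs) as Ez.
    pose proof (cone_id k m Hkm Hm2 M a r s Hs) as EM.
    pose proof (sin_gt k m Hkm Hm2 r ltac:(lia) Hr) as S1.
    pose proof (sin_ge k m Hkm Hm2 (r - s) ltac:(lia)) as S2.
    pose proof (sin_ge k m Hkm Hm2 s ltac:(lia)) as S3.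
    specialize (H1 z Hz). specialize (H2 z Hz).
    assert (sin (INR r * th) * dot M (vtx (a + s)) <= sin (INR r * th) * dot z (vtx (a + s))) by nra.
    nra.
Qed.

Definition RC (x v : pt) := exists y, MinAtV y v /\ dot y v + rho k <= dot x v.

Hypothesis WIDTH : forall l z z', L z -> L z' -> dot z (vtx l) - dot z' (vtx l) < 1.

Lemma rec_main g : (1 <= g)%nat -> (g <= m)%nat -> forall i x, L x -> RC x (vtx i) -> RC x (vtx (i + g)) -> False.
Proof.
  induction g as [g IH] using (well_founded_induction lt_wf).
  intros Hg1 Hgm i x Hx [yi [[Hyi Myi] Ri]] [yj [[Hyj Myj] Rj]].
  set (c := (i + m + 1)%nat).
  destruct (ext_max k m Hkm Hm2 p n Hadm (vtx c)) as [M [HM Hmax]].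
  destruct (k2 M c HM Hmax) as (j1 & a & t & j2 & b & t' & Hj1 & A1 & V1 & Ht & Hj2 & A2 & V2 & Ht1 & Ht2 & Ht3).
  pose proof (act_min k m Hkm Hm2 p n M j1 a HM Hj1 A1) as Ma.
  pose proof (act_min k m Hkm Hm2 p n M j2 b HM Hj2 A2) as Mb.
  rewrite V1 in Ma. rewrite V2 in Mb.
  set (u := (t' - m)%nat).
  assert (Vi : vtx (c + t + (m - t)) = vtx i).
  { replace (c + t + (m - t))%nat with (i + k)%nat by (unfold c; lia). apply vtx_k. }
  assert (Vb : vtx (c + t') = vtx (i + u)).
  { replace (c + t')%nat with ((i + u) + k)%nat by (unfold c, u; lia). apply vtx_k. }
  replace (c + t')%nat with (c + t + (t' - t))%nat in Mb by lia.
  destruct (le_lt_dec g u) as [Hgu|Hug].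
  - (* common minimizer *)
    pose proof (cone_min M (c + t) (t' - t) (m - t) Ma Mb ltac:(lia) ltac:(lia)) as Mi.
    pose proof (cone_min M (c + t) (t' - t) (m - t + g) Ma Mb ltac:(lia) ltac:(unfold u in Hgu; lia)) as Mj.
    rewrite Vi in Mi.
    replace (c + t + (m - t + g))%nat with ((i + g) + k)%nat in Mj by (unfold c; lia).
    rewrite vtx_k in Mj.
    destruct Mi as [_ Mi]. destruct Mj as [_ Mj].
    specialize (Mi yi Hyi). specialize (Mj yj Hyj).
    assert (D1 : rho k <= dot (psub x M) (vtx i)) by (rewrite dot_psub; lra).
    assert (D2 : rho k <= dot (psub x M) (vtx (i + g))) by (rewrite dot_psub; lra).
    destruct (dtrick k m Hkm Hm2 (psub x M) i g Hg1 Hgm D1 D2) as [W|W]; rewrite dot_psub in W.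
    + pose proof (WIDTH (i + g * (m + 1)) x M Hx HM). lra.
    + pose proof (WIDTH (i + g * (m + 1)) M x HM Hx). lra.
  -
    refine (IH u Hug _ _ i x Hx _ _); try (unfold u; lia).
    + exists yi. split. exact (conj Hyi Myi). exact Ri.
    + exists M. rewrite <- Vb. replace (c + t + (t' - t))%nat with (c + t')%nat in Mb by lia. split. exact Mb.
      rewrite Vb.
      unfold active in A2. rewrite V2, dot_psub in A2.
      assert (Hz : 0 <= dot (psub x (PP p j2)) (vtx (i + u))).
      { pose proof (cone_id k m Hkm Hm2 (psub x (PP p j2)) i g u ltac:(unfold u in *; lia)) as Ez.
        pose proof (sin_gt k m Hkm Hm2 g Hg1 Hgm) as S1.
        pose proof (sin_ge k m Hkm Hm2 (g - u) ltac:(lia)) as S2.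
        pose proof (sin_ge k m Hkm Hm2 u ltac:(unfold u in *; lia)) as S3.
        pose proof (L_all k m Hkm Hm2 p n yi j2 i Hyi Hj2) as Li.
        pose proof (L_all k m Hkm Hm2 p n yj j2 (i + g) Hyj Hj2) as Lj.
        rewrite dot_psub in Li, Lj.
        assert (0 <= dot (psub x (PP p j2)) (vtx i)) by (rewrite dot_psub; lra).
        assert (0 <= dot (psub x (PP p j2)) (vtx (i + g))) by (rewrite dot_psub; lra).
        nra. }
      rewrite dot_psub in Hz. rewrite Vb in A2. lra.
Qed.

End GeoF.

Theorem lemma6 (k : nat) (Hk5 : (5 <= k)%nat) (Hodd : Nat.odd k = true) :
  exists delta : R, 0 < delta /\
    forall (p : nat -> pt) (n : nat),
      admissible k p ->
      (forall i h, (i < k)%nat -> is_height k p n i h -> h < rho k + delta) ->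
      forall i j, (i < k)%nat -> (j < k)%nat -> i <> j ->
        forall x, ~ (in_change_region k p n i x /\ in_change_region k p n j x).
Proof.
  set (m := Nat.div2 k).
  assert (Hkm : k = (2 * m + 1)%nat).
  { pose proof (Nat.div2_odd k) as H. rewrite Hodd in H. simpl in H. unfold m. lia. }
  assert (Hm2 : (2 <= m)%nat) by lia.
  exists (1 - rho k). split.
  { pose proof (rho_lt1 k m Hkm Hm2). lra. }
  intros p n Hadm Hh i j Hi Hj Hij x [Hxi Hxj].
  assert (WIDTH : forall l z z', inKn k p n z -> inKn k p n z' ->
            dot z (vtx k l) - dot z' (vtx k l) < 1).
  { intros l z z' Hz Hz'.
    rewrite (vtx_mod k m Hkm Hm2 l).
    set (l' := (l mod k)%nat).
    assert (Hl' : (l' < k)%nat) by (apply Nat.mod_upper_bound; lia).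
    destruct (ext_max k m Hkm Hm2 p n Hadm (vtx k l')) as [Mx [HMx Hmx]].
    destruct (ext_min k m Hkm Hm2 p n Hadm (vtx k l')) as [Mn [HMn Hmn]].
    assert (Hh' : dot Mx (vtx k l') - dot Mn (vtx k l') < rho k + (1 - rho k)).
    { apply (Hh l'). exact Hl'. exists (dot Mx (vtx k l')), (dot Mn (vtx k l')).
      split. split. exists Mx. split. exact HMx. reflexivity. exact Hmx.
      split. split. exists Mn. split. exact HMn. reflexivity. exact Hmn.
      reflexivity. }
    specialize (Hmx z Hz). specialize (Hmn z' Hz'). lra. }
  assert (toRC : forall q, in_change_region k p n q x -> RC k p n x (vtx k q)).
  { intros q [Hx [a' [[[y [Hy Ey]] Hmin] Ha']]].
    exists y. split. split. exact Hy. intros z Hz. rewrite Ey. apply Hmin. exact Hz.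
    rewrite Ey. exact Ha'. }
  pose proof (toRC i Hxi) as RCi. pose proof (toRC j Hxj) as RCj.
  destruct Hxi as [Hx _].
  assert (GEN : forall a b, (a < b)%nat -> (b < k)%nat -> RC k p n x (vtx k a) -> RC k p n x (vtx k b) -> False).
  { intros a b Hab Hb RCa RCb.
    destruct (le_lt_dec (b - a) m) as [Hg|Hg].
    - apply (rec_main k m Hkm Hm2 p n Hadm WIDTH (b - a) ltac:(lia) Hg a x Hx RCa).
      replace (a + (b - a))%nat with b by lia. exact RCb.
    - apply (rec_main k m Hkm Hm2 p n Hadm WIDTH (a + k - b) ltac:(lia) ltac:(lia) b x Hx RCb).
      replace (b + (a + k - b))%nat with (a + k)%nat by lia.
      rewrite (vtx_plus_k k m Hkm Hm2). exact RCa. }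
  destruct (proj1 (Nat.lt_gt_cases i j) Hij) as [Hlt|Hgt].
  - exact (GEN i j Hlt Hj RCi RCj).
  - exact (GEN j i Hgt Hi RCj RCi).
Qed.
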